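(* For all sufficiently large $n$, there is a covering $3$-colouring of the edges of $K_n^{(4)}$ with no $5$-set of vertices whose $4$-subsets receive all three colours.
   Context: $K_n^{(4)}$ is the complete $4$-uniform hypergraph on $n$ vertices (edges are all $4$-subsets). A $4$-uniform hypergraph on vertex set $V$ is a covering if every $3$-subset of $V$ is contained in some edge. A colouring of the edges of $K_n^{(4)}$ is covering if for each colour, the $4$-graph on all $n$ vertices formed by the edges of that colour is a covering. *)

(* Defs.v *)
From mathcomp Require Import all_boot.
Set Implicit Arguments. Unset Strict Implicit. Unset Printing Implicit Defensive.

(* An edge-colouring of K_n^(4) with k colours: a function assigning a colour
   to every subset of 'I_n; only its values on 4-subsets are relevant. *)
Definition colouring (n k : nat) := {set 'I_n} -> 'I_k.

Definition is_covering (n : nat) (H : {set {set 'I_n}}) : Prop :=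
  forall T : {set 'I_n}, #|T| = 3 -> exists2 E, E \in H & T \subset E.

Definition colour_class (n k : nat) (c : colouring n k) (i : 'I_k)
  : {set {set 'I_n}} := [set E : {set 'I_n} | (#|E| == 4) && (c E == i)].

Definition covering_colouring (n k : nat) (c : colouring n k) : Prop :=
  forall i : 'I_k, is_covering (colour_class c i).

Definition rainbow5 (n k : nat) (c : colouring n k) (S : {set 'I_n}) : Prop :=
  #|S| = 5 /\ forall i : 'I_k, exists2 E : {set 'I_n},
     (E \subset S) && (#|E| == 4) & c E = i.

(* Main.v *)
Require Import Defs.
From mathcomp Require Import all_boot.
From mathcomp Require Import zify.
Set Implicit Arguments. Unset Strict Implicit. Unset Printing Implicit Defensive.

Definition cnts (l : seq nat) := [seq count (fun a => a %% 7 == t) l | t <- iota 0 7].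
Definition maskL (cs : seq nat) := foldr (fun c acc => (c != 0) + 2 * acc) 0 cs.
Definition masks := [:: 23; 43; 45; 46; 53; 57; 75; 85; 86; 90; 92; 101; 106; 114].
Definition Gc (cs : seq nat) (p : nat) : nat :=
  let m := foldr maxn 0 cs in
  if m == 4 then (if odd p then 1 else 2)
  else if m == 3 then 0
  else if m == 2 then (if count (pred1 2) cs == 2 then 1 else 2)
  else if maskL cs \in masks then 1 else 0.
Definition Gn (l : seq nat) := Gc (cnts l) (count (fun a => 7 <= a) l).
Fixpoint allS (k lo : nat) : seq (seq nat) :=
  if k is k'.+1 then [seq a :: l | a <- iota lo (14 - lo), l <- allS k' a] else [:: [::]].
Definition colsR (l : seq nat) := [seq Gn (rem a l) | a <- l].
Lemma check3 : all (fun L => all (fun i => has (fun x => Gn (x :: L) == i) (iota 0 14)) (iota 0 3)) (allS 3 0).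
Proof. vm_compute. reflexivity. Qed.
Lemma check5 : all (fun l => ~~ [&& 0 \in colsR l, 1 \in colsR l & 2 \in colsR l]) (allS 5 0).
Proof. vm_compute. reflexivity. Qed.

Lemma Gn_perm l l' : perm_eq l l' -> Gn l = Gn l'.
Proof.
move=> /permP H; rewrite /Gn /cnts H; congr Gc.
by apply: eq_map => t; rewrite H.
Qed.

Lemma Gn_lt3 l : Gn l < 3.
Proof. by rewrite /Gn /Gc; repeat case: ifP. Qed.

Lemma allS_mem l lo : sorted leq l -> all (fun a => lo <= a) l ->
  all (fun a => a < 14) l -> l \in allS (size l) lo.
Proof.
elim: l lo => [|a l IH] lo //= Hs /andP[Hla Hl] /andP[Ha Hr].
apply: (allpairs_f_dep (fun a l => a :: l)).
  by rewrite mem_iota Hla /=; lia.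
apply: IH => //; first exact: path_sorted Hs.
exact: (order_path_min leq_trans Hs).
Qed.

Lemma perm_rem_eq (a : nat) l l' : perm_eq l l' -> a \in l -> perm_eq (rem a l) (rem a l').
Proof.
move=> H al.
have al' : a \in l' by rewrite -(perm_mem H).
have := perm_to_rem al; have := perm_to_rem al'.
move=> H1 H2.
have : perm_eq (a :: rem a l) (a :: rem a l').
  by apply: perm_trans (perm_trans H H1); rewrite perm_sym.
by rewrite perm_cons.
Qed.

Lemma colsR_perm l l' c : perm_eq l l' -> c \in colsR l -> c \in colsR l'.
Proof.
move=> H /mapP[a al ->].
rewrite (Gn_perm (perm_rem_eq H al)).
apply: map_f; by rewrite -(perm_mem H).
Qed.
Definition lab n (x : 'I_n) : nat := x %% 7 + 7 * odd (x %/ 7).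
Definition col n : colouring n 3 := fun E => inord (Gn (map (@lab n) (enum E))).

Lemma col_val n (E : {set 'I_n}) : val (col E) = Gn (map (@lab n) (enum E)).
Proof. exact: (@inordK 2 _ (Gn_lt3 _)). Qed.

Lemma lab_lt n (x : 'I_n) : lab x < 14.
Proof. rewrite /lab; have := ltn_pmod x (isT : 0 < 7); case: (odd _) => /=; lia. Qed.

Lemma all_lab n (s : seq 'I_n) : all (fun a => a < 14) (map (@lab n) s).
Proof. by apply/allP => a /mapP[x _ ->]; apply: lab_lt. Qed.

Lemma lab_mk q a : a < 7 -> (7 * q + a) %% 7 = a /\ (7 * q + a) %/ 7 = q.
Proof.
move=> Ha; split.
  by rewrite mulnC modnMDl modn_small.
by rewrite mulnC divnMDl // divn_small ?addn0.
Qed.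

Lemma exists_lab n (T : {set 'I_n}) (lam : nat) : 56 <= n -> #|T| = 3 -> lam < 14 ->
  exists2 x : 'I_n, lab x = lam & x \notin T.
Proof.
move=> Hn HT Hl.
set a := lam %% 7. set p := lam %/ 7.
have Ha : a < 7 by rewrite ltn_mod.
have Hp : p < 2 by rewrite ltn_divLR //.
have Hlam : lam = p * 7 + a by rewrite /p /a -divn_eq.
have Hv : forall k : 'I_4, 7 * (2 * k + p) + a < n.
  move=> k; have := ltn_ord k; lia.
pose v := fun k : 'I_4 => Ordinal (Hv k).
have vinj : injective v.
  move=> k k' /(congr1 val) /= E; apply: val_inj => /=; lia.
have labv : forall k, lab (v k) = lam.
  move=> k; rewrite /lab /=; have [-> ->] := lab_mk (2 * k + p) Ha.
  rewrite oddD oddM /= Hlam.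
  by case: (p) Hp => [|[|]] //= _; lia.
case: (boolP [forall k, v k \in T]) => [/forallP Hall|].
  have : [set v k | k in 'I_4] \subset T by apply/subsetP => y /imsetP[k _ ->]; exact: Hall.
  move/subset_leq_card; rewrite card_imset // card_ord HT //.
by rewrite negb_forall => /existsP[k Hk]; exists (v k).
Qed.

Lemma col_cover n : 56 <= n -> covering_colouring (@col n).
Proof.
move=> Hn i T HT.
set L := map (@lab n) (enum T).
have HL : sort leq L \in allS 3 0.
  have -> : 3 = size (sort leq L) by rewrite size_sort size_map -cardE HT.
  apply: allS_mem; first exact: (sort_sorted leq_total).
    by apply/allP.
  by rewrite (perm_all _ (permEl (perm_sort _ _))) all_lab.
have := allP check3 _ HL => /allP /(_ (val i)).
rewrite mem_iota ltn_ord => /(_ isT) /hasP[lam]; rewrite mem_iota /= => Hlam /eqP Hg.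
have [x labx xT] := exists_lab Hn HT Hlam.
exists (x |: T); last exact: subsetUr.
rewrite inE cardsU1 xT HT /=; apply/eqP/val_inj.
transitivity (Gn (lam :: sort leq L)); last exact: Hg.
rewrite col_val.
apply: Gn_perm.
have Pe : perm_eq (enum (x |: T)) (x :: enum T).
  apply: uniq_perm; first exact: enum_uniq.
    by rewrite /= mem_enum xT enum_uniq.
  by move=> y; rewrite mem_enum in_setU1 inE mem_enum.
apply: perm_trans (perm_map _ Pe) _.
by rewrite /= labx perm_cons perm_sym perm_sort.
Qed.

Lemma col_norainbow n (S : {set 'I_n}) : ~ rainbow5 (@col n) S.
Proof.
case=> HS H.
set s := enum S. set ls := map (@lab n) s.
have Hmem : forall i : 'I_3, val i \in colsR ls.
  move=> i; have [E /andP[ES /eqP E4] Ei] := H i.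
  have : ~~ (S \subset E).
    apply/negP => /subset_leq_card; rewrite HS E4 //.
  case/subsetPn => x xS xE.
  have xs : x \in s by rewrite mem_enum.
  have EeqS : E = S :\ x.
    apply/eqP; rewrite eqEcard; apply/andP; split.
      apply/subsetP => y yE; rewrite in_setD1 (subsetP ES _ yE) andbT.
      by apply/eqP => yx; move: xE; rewrite -yx yE.
    rewrite E4; move: HS; rewrite (cardsD1 x S) xS /=; lia.
  have P1 : perm_eq (enum E) (rem x s).
    apply: uniq_perm; first exact: enum_uniq.
      exact: rem_uniq (enum_uniq _).
    by move=> y; rewrite mem_enum EeqS in_setD1 (mem_rem_uniq _ (enum_uniq _)) inE mem_enum.
  have P2 : perm_eq (map (@lab n) (rem x s)) (rem (lab x) ls).
    have lxl : lab x \in ls by apply: map_f.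
    have := perm_map (@lab n) (perm_to_rem xs); rewrite /= -/ls => Q1.
    have Q2 := perm_to_rem lxl.
    have : perm_eq (lab x :: map (@lab n) (rem x s)) (lab x :: rem (lab x) ls).
      by apply: perm_trans (perm_trans _ Q2); rewrite perm_sym.
    by rewrite perm_cons.
  rewrite -Ei col_val (Gn_perm (perm_trans (perm_map _ P1) P2)).
  by apply: map_f; apply: map_f.
have Hls : sort leq ls \in allS 5 0.
  have -> : 5 = size (sort leq ls) by rewrite size_sort size_map -cardE HS.
  apply: allS_mem; first exact: (sort_sorted leq_total).
    by apply/allP.
  by rewrite (perm_all _ (permEl (perm_sort _ _))) all_lab.
have := allP check5 _ Hls.
have M : forall c, c < 3 -> c \in colsR (sort leq ls).
  move=> c Hc; apply: (colsR_perm (l := ls)); first by rewrite perm_sym perm_sort.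
  exact: (Hmem (Ordinal Hc)).
by rewrite !M.
Qed.

Theorem lemma16 : exists N : nat, forall n : nat, N <= n ->
  exists c : colouring n 3,
    covering_colouring c /\ forall S : {set 'I_n}, ~ rainbow5 c S.
Proof.
exists 56 => n Hn; exists (@col n); split; first exact: col_cover.
exact: col_norainbow.
Qed.
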